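(* Fix $(\varepsilon,\delta)\in(0,1)\times(0,\delta_0]$ and suppose $(R_1,R_2)\in\mathcal S^\ast(\varepsilon,\delta|p_{X_1X_2},p_{K_1K_2})$. Then for every $\gamma>0$ there exists $n_0=n_0(\gamma)$ such that for all $n\ge n_0$, $$R_i\le H(K_i)+2\gamma+\zeta_n(\gamma,\varepsilon,\delta),\quad i=1,2.$$
   Context: All logarithms are base 2. $\mathcal X_1,\mathcal X_2$ are finite fields. $(X_1,X_2)$ has joint pmf $p_{X_1X_2}$ on $\mathcal X_1\times\mathcal X_2$ and $(K_1,K_2)$ has joint pmf $p_{K_1K_2}$ on $\mathcal X_1\times\mathcal X_2$. For block length $n$, $(\mathbf X_1,\mathbf X_2)$ is i.i.d. with law $p^n_{X_1X_2}$ (source), $(\mathbf K_1,\mathbf K_2)$ is i.i.d. with law $p^n_{K_1K_2}$ (keys), and the keys are independent of the sources. A distributed source encryption system at block length $n$ consists of finite sets $\mathcal C_i^{(n)}$, encryption maps $\Phi_i^{(n)}:\mathcal X_i^n\times\mathcal X_i^n\to\mathcal C_i^{(n)}$ (key, plaintext) and a decryption map $\Psi^{(n)}:\mathcal X_1^n\times\mathcal X_2^n\times\mathcal C_1^{(n)}\times\mathcal C_2^{(n)}\to\mathcal X_1^n\times\mathcal X_2^n$, such that there exist maps $\phi_i^{(n)}:\mathcal X_i^n\to\mathcal M_i^{(n)}$ (finite $\mathcal M_i^{(n)}$) and $\psi^{(n)}$ with $\Psi^{(n)}(\mathbf k_1,\mathbf k_2,\Phi_1^{(n)}(\mathbf k_1,\mathbf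 x_1),\Phi_2^{(n)}(\mathbf k_2,\mathbf x_2))=\psi^{(n)}(\phi_1^{(n)}(\mathbf x_1),\phi_2^{(n)}(\mathbf x_2))$ for all keys and plaintexts. Ciphertexts: $C_i^{(n)}=\Phi_i^{(n)}(\mathbf K_i,\mathbf X_i)$. Correct decoding set $\mathcal D^{(n)}:=\{(\mathbf x_1,\mathbf x_2):\psi^{(n)}(\phi_1^{(n)}(\mathbf x_1),\phi_2^{(n)}(\mathbf x_2))=(\mathbf x_1,\mathbf x_2)\}$; error probability $p_{\rm e}:=\Pr[(\mathbf X_1,\mathbf X_2)\notin\mathcal D^{(n)}]$. Fix a constant $\delta_0>0$. For $(\varepsilon,\delta)\in(0,1)\times[0,\delta_0]$, $(R_1,R_2)$ is an $(\varepsilon,\delta)$-reliable and secure rate pair if there is a sequence of systems $\{(\Phi_1^{(n)},\Phi_2^{(n)},\Psi^{(n)})\}_{n\ge1}$ such that for every $\gamma>0$ there is $n_0$ with, for all $n\ge n_0$: $\frac1n\log|\mathcal C_i^{(n)}|\le R_i+\gamma$ ($i=1,2$), $p_{\rm e}\le\varepsilon$, and $I(C_1^{(n)}C_2^{(n)};\mathbf X_1\mathbf X_2)\le\delta$. $\mathcal R^\ast(\varepsilon,\delta|p_{X_1X_2},p_{K_1K_2})$ is the set of such pairs and $\mathcal S^\ast(\varepsilon,\delta|p_{X_1X_2},p_{K_1K_2}):=\mathcal R^\ast(\varepsilon,\delta|p_{X_1X_2},p_{K_1K_2})\cap\{(R_1,R_2):R_1+R_2=H(X_1X_2)\}$. For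 $\gamma>0$ let $\tilde{\mathcal A}^{(n)}_\gamma$ be the set of $(\mathbf x_1,\mathbf x_2)\in\mathcal X_1^n\times\mathcal X_2^n$ with $\bigl|\frac1n\log\frac1{p^n_{X_i|X_{3-i}}(\mathbf x_i|\mathbf x_{3-i})}-H(X_i|X_{3-i})\bigr|\le\gamma$ for $i=1,2$ and $\bigl|\frac1n\log\frac1{p^n_{X_1X_2}(\mathbf x_1,\mathbf x_2)}-H(X_1X_2)\bigr|\le\gamma$. Set $\nu_n(\gamma):=p^n_{X_1X_2}((\tilde{\mathcal A}^{(n)}_\gamma)^c)$, $\nu_n(\gamma,\varepsilon):=\nu_n(\gamma)+\varepsilon$, and $\zeta_n(\gamma,\varepsilon,\delta):=\frac1n\Bigl[\frac{\delta}{1-\nu_n(\gamma,\varepsilon)}+\log\frac1{1-\nu_n(\gamma,\varepsilon)}\Bigr]$. *)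

(* Defs.v *)
From HB Require Import structures.
From mathcomp Require Import all_boot all_order all_algebra.
From mathcomp Require Import reals exp.
Set Implicit Arguments. Unset Strict Implicit. Unset Printing Implicit Defensive.
Import Order.TTheory GRing.Theory Num.Theory.
Local Open Scope ring_scope.

Notation vec T n := {ffun 'I_n -> T}.

Section Info.
Variable R : realType.

Definition log2 (x : R) : R := ln x / ln 2.

Definition is_pmf2 (A B : finType) (p : A -> B -> R) : Prop :=
  (forall a b, 0 <= p a b) /\ \sum_(a : A) \sum_(b : B) p a b = 1.

Definition marg1 (A B : finType) (p : A -> B -> R) (a : A) : R := \sum_(b : B) p a b.
Definition marg2 (A B : finType) (p : A -> B -> R) (b : B) : R := \sum_(a : A) p a b.

(* Shannon entropy (0 log 0 = 0) *)
Definition entropy (A : finType) (q : A -> R) : R :=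
  - \sum_(a : A | q a != 0) q a * log2 (q a).

Definition joint_entropy (A B : finType) (p : A -> B -> R) : R :=
  - \sum_(a : A) \sum_(b : B | p a b != 0) p a b * log2 (p a b).

(* H(X1|X2) and H(X2|X1) *)
Definition cond_entropy12 (A B : finType) (p : A -> B -> R) : R :=
  - \sum_(a : A) \sum_(b : B | p a b != 0) p a b * log2 (p a b / marg2 p b).
Definition cond_entropy21 (A B : finType) (p : A -> B -> R) : R :=
  - \sum_(a : A) \sum_(b : B | p a b != 0) p a b * log2 (p a b / marg1 p a).

Definition mutinf (A B : finType) (P : A -> B -> R) : R :=
  \sum_(a : A) \sum_(b : B | P a b != 0)
     P a b * log2 (P a b / (marg1 P a * marg2 P b)).

Definition pn (A B : finType) (p : A -> B -> R) (n : nat)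
  (x1 : vec A n) (x2 : vec B n) : R := \prod_(i < n) p (x1 i) (x2 i).

Definition pn_cond12 (A B : finType) (p : A -> B -> R) (n : nat)
  (x1 : vec A n) (x2 : vec B n) : R :=
  \prod_(i < n) (p (x1 i) (x2 i) / marg2 p (x2 i)).
Definition pn_cond21 (A B : finType) (p : A -> B -> R) (n : nat)
  (x1 : vec A n) (x2 : vec B n) : R :=
  \prod_(i < n) (p (x1 i) (x2 i) / marg1 p (x1 i)).

(* the set \tilde A^(n)_gamma (membership requires p^n(x1,x2) > 0, since
   otherwise log(1/p) = +oo and the defining inequalities fail) *)
Definition typical (A B : finType) (p : A -> B -> R) (n : nat) (gamma : R)
  (x1 : vec A n) (x2 : vec B n) : bool :=
  [&& 0 < pn p x1 x2,
      `| n%:R^-1 * log2 (pn_cond12 p x1 x2)^-1 - cond_entropy12 p | <= gamma,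
      `| n%:R^-1 * log2 (pn_cond21 p x1 x2)^-1 - cond_entropy21 p | <= gamma &
      `| n%:R^-1 * log2 (pn p x1 x2)^-1 - joint_entropy p | <= gamma].

Definition nu (A B : finType) (p : A -> B -> R) (n : nat) (gamma : R) : R :=
  \sum_(x1 : vec A n) \sum_(x2 : vec B n | ~~ typical p gamma x1 x2) pn p x1 x2.

Definition nu_eps (A B : finType) (p : A -> B -> R) (n : nat) (gamma eps : R) : R :=
  nu p n gamma + eps.

Definition zeta (A B : finType) (p : A -> B -> R) (n : nat) (gamma eps delta : R) : R :=
  n%:R^-1 * (delta / (1 - nu_eps p n gamma eps) + log2 (1 - nu_eps p n gamma eps)^-1).

End Info.

Unset Implicit Arguments.
(* distributed source encryption system at block length n *)
Record system (X1 X2 : finType) (n : nat) := System {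
  C1 : finType; C2 : finType;
  Phi1 : vec X1 n -> vec X1 n -> C1;   (* key, plaintext *)
  Phi2 : vec X2 n -> vec X2 n -> C2;
  Psi : vec X1 n -> vec X2 n -> C1 -> C2 -> (vec X1 n * vec X2 n)%type;
  M1 : finType; M2 : finType;
  phi1 : vec X1 n -> M1; phi2 : vec X2 n -> M2;
  psi : M1 -> M2 -> (vec X1 n * vec X2 n)%type;
  factorization : forall k1 k2 x1 x2,
    Psi k1 k2 (Phi1 k1 x1) (Phi2 k2 x2) = psi (phi1 x1) (phi2 x2)
}.
Arguments C1 {X1 X2 n}. Arguments C2 {X1 X2 n}.
Arguments Phi1 {X1 X2 n}. Arguments Phi2 {X1 X2 n}. Arguments Psi {X1 X2 n}.
Arguments M1 {X1 X2 n}. Arguments M2 {X1 X2 n}.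
Arguments phi1 {X1 X2 n}. Arguments phi2 {X1 X2 n}. Arguments psi {X1 X2 n}.
Set Implicit Arguments.

Section Sys.
Variable R : realType.
Variables (X1 X2 : finType).

Definition err_prob (n : nat) (S : system X1 X2 n) (pX : X1 -> X2 -> R) : R :=
  \sum_(x1 : vec X1 n) \sum_(x2 : vec X2 n | psi S (phi1 S x1) (phi2 S x2) != (x1, x2))
     pn pX x1 x2.

(* joint pmf of ((C1,C2),(X1,X2)), keys independent of sources *)
Definition cipher_joint (n : nat) (S : system X1 X2 n) (pX pK : X1 -> X2 -> R)
  (c : (C1 S * C2 S)%type) (x : (vec X1 n * vec X2 n)%type) : R :=
  \sum_(k1 : vec X1 n) \sum_(k2 : vec X2 n)
     pn pK k1 k2 * pn pX x.1 x.2 *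
     ((Phi1 S k1 x.1 == c.1) && (Phi2 S k2 x.2 == c.2))%:R.

Definition leakage (n : nat) (S : system X1 X2 n) (pX pK : X1 -> X2 -> R) : R :=
  mutinf (@cipher_joint n S pX pK).

Definition reliable_secure (pX pK : X1 -> X2 -> R) (eps delta R1 R2 : R) : Prop :=
  exists sys : forall n, system X1 X2 n,
    forall gamma : R, 0 < gamma -> exists n0 : nat, forall n : nat, (n0 <= n)%N ->
      [/\ n%:R^-1 * log2 #|C1 (sys n)|%:R <= R1 + gamma,
          n%:R^-1 * log2 #|C2 (sys n)|%:R <= R2 + gamma,
          err_prob (sys n) pX <= eps &
          leakage (sys n) pX pK <= delta].

Definition in_Sstar (pX pK : X1 -> X2 -> R) (eps delta R1 R2 : R) : Prop :=
  reliable_secure pX pK eps delta R1 R2 /\ R1 + R2 = joint_entropy pX.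

End Sys.

(* Main.v *)
Require Import Defs.
From HB Require Import structures.
From mathcomp Require Import all_boot all_order all_algebra.
From mathcomp Require Import reals exp.
From mathcomp Require Import ring lra.
From Stdlib Require Import FunctionalExtensionality.
Import Order.TTheory GRing.Theory Num.Theory.
Local Open Scope ring_scope.

Lemma ln_le_sub1 {R : realType} (y : R) : 0 < y -> ln y <= y - 1.
Proof.
move=> y0; have := @le_ln1Dx R (y - 1).
have -> : 1 + (y - 1) = y by ring.
apply; lra.
Qed.

Lemma xlnle {R : realType} (u v : R) : 0 <= u -> 0 <= v -> (0 < u -> 0 < v) ->
  u * ln (v / u) <= v - u.
Proof.
move=> u0 v0 uv; have [->|u0'] := eqVneq u 0; first by rewrite mul0r subr0.
have up : 0 < u by rewrite lt_def u0' u0.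
have vp := uv up.
have H := @ln_le_sub1 _ _ (divr_gt0 vp up).
rewrite -(ler_pM2l up) in H; apply: le_trans H _.
by rewrite mulrBr mulr1 mulrCA divff ?mulr1 // gt_eqF.
Qed.

Lemma xlnge {R : realType} (u v : R) : 0 <= u -> 0 <= v -> (0 < u -> 0 < v) ->
  u - v <= u * ln (u / v).
Proof.
move=> u0 v0 uv; have [->|u0'] := eqVneq u 0; first by rewrite mul0r sub0r oppr_le0.
have up : 0 < u by rewrite lt_def u0' u0.
have vp := uv up.
have := @xlnle _ u v u0 v0 uv.
rewrite -[u / v]invf_div lnV ?posrE ?divr_gt0 //; lra.
Qed.

Lemma sum_eq1 {R : realType} (C : finType) (y : C) : \sum_(c : C) ((y == c)%:R : R) = 1.
Proof.
rewrite (bigD1 y) //= eqxx big1 ?addr0 // => c /negbTE; rewrite eq_sym => ->.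
by [].
Qed.

Definition Jf {R : realType} {K X C : finType} (q : K -> R) (p : X -> R)
  (Phi : K -> X -> C) (c : C) (x : X) : R :=
  \sum_k q k * p x * (Phi k x == c)%:R.
Definition J3 {R : realType} {K K1 X C : finType} (q : K -> R) (p : X -> R)
  (Phi : K -> X -> C) (pi : K -> K1) (a : K1) (c : C) (x : X) : R :=
  \sum_(k | pi k == a) q k * p x * (Phi k x == c)%:R.
Definition Pc {R : realType} {K X C : finType} (q : K -> R) (p : X -> R)
  (Phi : K -> X -> C) (c : C) : R := \sum_x Jf q p Phi c x.
Definition q1f {R : realType} {K K1 : finType} (q : K -> R) (pi : K -> K1) (a : K1) : R :=
  \sum_(k | pi k == a) q k.
Definition Ival {R : realType} {K X C : finType} (q : K -> R) (p : X -> R)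
  (Phi : K -> X -> C) : R :=
  \sum_c \sum_x Jf q p Phi c x * ln (Jf q p Phi c x / (Pc q p Phi c * p x)).

Lemma core {R : realType} (K K1 X C : finType) (q : K -> R) (p : X -> R)
  (Phi : K -> X -> C) (pi : K -> K1) (T : pred X) (N : nat) (h : R) :
  (forall k, 0 <= q k) -> \sum_k q k = 1 -> (forall x, 0 <= p x) -> \sum_x p x = 1 ->
  (forall x, T x -> 0 < p x) -> (0 < N)%N ->
  (forall a c, \sum_(x | T x) ((J3 q p Phi pi a c x != 0)%:R : R) <= N%:R) ->
  (forall x, T x -> h <= - ln (p x)) ->
  (\sum_(x | T x) p x) * h <= - (\sum_(x | T x) p x) * ln (\sum_(x | T x) p x) + Ival q p Phi
            - (\sum_(x | T x) p x) * \sum_a q1f q pi a * ln (q1f q pi a)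
            + (\sum_(x | T x) p x) * ln N%:R.
Proof.
move=> q0 q1 p0 p1 Tp N0 Hcnt Hh; set PT := \sum_(x | T x) p x.
have F1 x : \sum_c Jf q p Phi c x = p x.
  rewrite /Jf exchange_big /=.
  under eq_bigr do rewrite -big_distrr /= sum_eq1 mulr1.
  by rewrite -big_distrl /= q1 mul1r.
have F2 : \sum_c Pc q p Phi c = 1.
  by rewrite /Pc exchange_big /=; under eq_bigr do rewrite F1.
have F3 c x : Jf q p Phi c x = \sum_a J3 q p Phi pi a c x.
  by rewrite /Jf /J3 (partition_big pi predT).
have F4 a x : \sum_c J3 q p Phi pi a c x = q1f q pi a * p x.
  rewrite /J3 exchange_big /= /q1f big_distrl /=.
  by apply: eq_bigr => k _; rewrite -big_distrr /= sum_eq1 mulr1.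
have F5 : \sum_a q1f q pi a = 1 by rewrite /q1f -q1 (partition_big pi predT).
have J30 a c x : 0 <= J3 q p Phi pi a c x.
  by apply: sumr_ge0 => k _; rewrite !mulr_ge0.
have Jf0 c x : 0 <= Jf q p Phi c x.
  by apply: sumr_ge0 => k _; rewrite !mulr_ge0.
have Pc0 c : 0 <= Pc q p Phi c by apply: sumr_ge0.
have q10 a : 0 <= q1f q pi a by apply: sumr_ge0.
have F7 a c x : J3 q p Phi pi a c x <= Jf q p Phi c x.
  rewrite F3 (bigD1 a) //= lerDl; exact: sumr_ge0.
have F8 c x : Jf q p Phi c x <= Pc q p Phi c.
  rewrite /Pc (bigD1 x) //= lerDl; exact: sumr_ge0.
have Fp c x : Jf q p Phi c x <= p x.
  rewrite -F1 (bigD1 c) //= lerDl; exact: sumr_ge0.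
have F9 a c x : J3 q p Phi pi a c x <= q1f q pi a * p x.
  rewrite -F4 (bigD1 c) //= lerDl; exact: sumr_ge0.

set S := fun x => \sum_c (Jf q p Phi) c x * ln ((Jf q p Phi) c x / ((Pc q p Phi) c * p x)).
have Sge0 x : 0 <= S x.
  apply: le_trans (_ : \sum_c ((Jf q p Phi) c x - (Pc q p Phi) c * p x) <= _).
    by rewrite sumrB F1 -big_distrl /= F2 mul1r subrr.
  apply: ler_sum => c _; apply: xlnge => //; first by rewrite mulr_ge0.
  move=> Jp; rewrite mulr_gt0 //; first exact: lt_le_trans Jp (F8 c x).
  exact: lt_le_trans Jp (Fp c x).
have Iexp : Ival q p Phi = \sum_x S x by rewrite /Ival exchange_big.
have IT : \sum_(x | T x) S x <= Ival q p Phi.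
  rewrite Iexp [X in _ <= X](bigID T) /= -[X in X <= _]addr0; apply: lerD; first exact: lexx.
  exact: sumr_ge0.
have PT0 : 0 <= PT by apply: sumr_ge0.
have [PTe|PTn0] := eqVneq PT 0.
  rewrite PTe !mul0r oppr0 !mul0r add0r ?subr0 ?addr0.
  by rewrite Iexp; apply: sumr_ge0.
have PTp : 0 < PT by rewrite lt_def PTn0 PT0.
set L := N%:R / PT.
have Lp : 0 < L by rewrite divr_gt0 // ltr0n.
have stepA : PT * h <= \sum_(x | T x) p x * (- ln (p x)).
  rewrite /PT big_distrl /=; apply: ler_sum => x Tx.
  by apply: ler_wpM2l => //; apply: Hh.
have stepB x : T x -> p x * (- ln (p x)) = \sum_c (Jf q p Phi) c x * ln ((Pc q p Phi) c / (Jf q p Phi) c x) + S x.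
  move=> Tx; rewrite /S -{1}F1 big_distrl -big_split; apply: eq_bigr => c _ /=.
  have [J0|Jn0] := eqVneq ((Jf q p Phi) c x) 0; first by rewrite J0 !mul0r addr0.
  have Jp : 0 < (Jf q p Phi) c x by rewrite lt_def Jn0 Jf0.
  have Pp : 0 < (Pc q p Phi) c by exact: lt_le_trans Jp (F8 c x).
  have pp : 0 < p x by exact: lt_le_trans Jp (Fp c x).
  rewrite -mulrDr; congr (_ * _).
  rewrite -lnM ?posrE ?divr_gt0 ?mulr_gt0 // -lnV ?posrE //; congr ln.
  by field; rewrite !gt_eqF.
have stepC x c : T x -> (Jf q p Phi) c x * ln ((Pc q p Phi) c / (Jf q p Phi) c x) <=
    \sum_a (J3 q p Phi pi) a c x * ln ((Pc q p Phi) c / (J3 q p Phi pi) a c x).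
  move=> Tx; rewrite {1}F3 big_distrl /=; apply: ler_sum => a _.
  have [J0|Jn0] := eqVneq ((J3 q p Phi pi) a c x) 0; first by rewrite J0 !mul0r.
  have Jp : 0 < (J3 q p Phi pi) a c x by rewrite lt_def Jn0 J30.
  have Jfp : 0 < (Jf q p Phi) c x by exact: lt_le_trans Jp (F7 a c x).
  have Pp : 0 < (Pc q p Phi) c by exact: lt_le_trans Jfp (F8 c x).
  apply: ler_wpM2l => //; rewrite ler_ln ?posrE ?divr_gt0 //.
  by apply: ler_wpM2l => //; rewrite lef_pV2 ?posrE.
have stepD x c a : T x -> (J3 q p Phi pi) a c x * ln ((Pc q p Phi) c / (J3 q p Phi pi) a c x) <=
    (J3 q p Phi pi) a c x * ln L + ((J3 q p Phi pi) a c x != 0)%:R * ((Pc q p Phi) c * (q1f q pi) a / L)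
    - (J3 q p Phi pi) a c x - (J3 q p Phi pi) a c x * ln ((q1f q pi) a).
  move=> Tx.
  have [J0|Jn0] := eqVneq ((J3 q p Phi pi) a c x) 0; first by rewrite J0 !mul0r !subr0 addr0.
  have Jp : 0 < (J3 q p Phi pi) a c x by rewrite lt_def Jn0 J30.
  have Jfp : 0 < (Jf q p Phi) c x by exact: lt_le_trans Jp (F7 a c x).
  have Pp : 0 < (Pc q p Phi) c by exact: lt_le_trans Jfp (F8 c x).
  have qp : 0 < (q1f q pi) a.
    rewrite lt_def q10 andbT; apply/eqP => qe.
    by move: (F9 a c x); rewrite qe mul0r => /(lt_le_trans Jp); rewrite ltxx.
  set y := (Pc q p Phi) c * (q1f q pi) a / ((J3 q p Phi pi) a c x * L).
  have yp : 0 < y by apply: divr_gt0; apply: mulr_gt0.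
  have -> : (Pc q p Phi) c / (J3 q p Phi pi) a c x = L * y / (q1f q pi) a.
    by rewrite /y; field; rewrite !gt_eqF.
  have e1 : ln (L * y / q1f q pi a) = ln L + ln y - ln (q1f q pi a).
    have Lyp : 0 < L * y by apply: mulr_gt0.
    by rewrite ln_div ?posrE // lnM ?posrE.
  rewrite e1.
  have Hy := @ln_le_sub1 _ _ yp.
  rewrite /= mul1r.
  have -> : (Pc q p Phi) c * (q1f q pi) a / L = (J3 q p Phi pi) a c x * y.
    by rewrite /y; field; rewrite !gt_eqF.
  rewrite -(ler_pM2l Jp) in Hy; nra.
have lin (F1' F2' F3' F4' : X -> C -> K1 -> R) :
  \sum_(x | T x) \sum_c \sum_a (F1' x c a + F2' x c a - F3' x c a - F4' x c a) =
  \sum_(x | T x) \sum_c \sum_a F1' x c a + \sum_(x | T x) \sum_c \sum_a F2' x c a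
  - \sum_(x | T x) \sum_c \sum_a F3' x c a - \sum_(x | T x) \sum_c \sum_a F4' x c a.
  rewrite -big_split -!sumrB /=; apply: eq_bigr => x _.
  rewrite -big_split -!sumrB /=; apply: eq_bigr => c _.
  by rewrite -big_split -!sumrB /=.
have E1 (z : R) : \sum_(x | T x) \sum_c \sum_a (J3 q p Phi pi) a c x * z = PT * z.
  rewrite /PT big_distrl; apply: eq_bigr => x _; rewrite -F1 big_distrl.
  by apply: eq_bigr => c _; rewrite F3 big_distrl.
have E2 : \sum_(x | T x) \sum_c \sum_a (J3 q p Phi pi) a c x * ln ((q1f q pi) a) =
    PT * \sum_a (q1f q pi) a * ln ((q1f q pi) a).
  rewrite /PT big_distrl; apply: eq_bigr => x _; rewrite exchange_big big_distrr /=.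
  apply: eq_bigr => a _; rewrite -big_distrl /= F4; ring.
have E3 : \sum_(x | T x) \sum_c \sum_a ((J3 q p Phi pi) a c x != 0)%:R
      * ((Pc q p Phi) c * (q1f q pi) a / L) <= PT.
  rewrite exchange_big /=.
  apply: le_trans (_ : \sum_c \sum_a N%:R * ((Pc q p Phi) c * (q1f q pi) a / L) <= _).
    apply: ler_sum => c _; rewrite exchange_big /=; apply: ler_sum => a _.
    rewrite -big_distrl /=; apply: ler_wpM2r; last exact: Hcnt.
    by apply: divr_ge0; [apply: mulr_ge0 | exact: ltW].
  rewrite le_eqVlt; apply/orP; left; apply/eqP.
  rewrite (eq_bigr (fun c => N%:R / L * (Pc q p Phi) c * \sum_a (q1f q pi) a)); last first.
    by move=> c _; rewrite big_distrr /=; apply: eq_bigr => a _; ring.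
  rewrite -big_distrl /= F5 mulr1 -big_distrr /= F2 mulr1 /L; field; by rewrite PTn0 pnatr_eq0 -lt0n N0.
have lnL : ln L = ln N%:R - ln PT by rewrite ln_div ?posrE ?ltr0n.
have HA : \sum_(x | T x) \sum_c (Jf q p Phi) c x * ln ((Pc q p Phi) c / (Jf q p Phi) c x) <=
  PT * ln L + PT - PT - PT * \sum_a (q1f q pi) a * ln ((q1f q pi) a).
  apply: le_trans (_ : \sum_(x | T x) \sum_c \sum_a (J3 q p Phi pi) a c x
          * ln ((Pc q p Phi) c / (J3 q p Phi pi) a c x) <= _).
    by apply: ler_sum => x Tx; apply: ler_sum => c _; exact: stepC.
  apply: le_trans (_ : \sum_(x | T x) \sum_c \sum_a
     ((J3 q p Phi pi) a c x * ln L + ((J3 q p Phi pi) a c x != 0)%:R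
      * ((Pc q p Phi) c * (q1f q pi) a / L)
    - (J3 q p Phi pi) a c x - (J3 q p Phi pi) a c x * ln ((q1f q pi) a)) <= _).
    by apply: ler_sum => x Tx; apply: ler_sum => c _; apply: ler_sum => a _; exact: stepD.
  rewrite lin E1 E2.
  have -> : \sum_(x | T x) \sum_c \sum_a (J3 q p Phi pi) a c x = PT.
    by rewrite -(mulr1 PT) -E1; do 3! (apply: eq_bigr => ? _); rewrite mulr1.
  apply: lerB; [apply: lerB; [apply: lerD; [exact: lexx | exact: E3] | exact: lexx] | exact: lexx].
have HB : \sum_(x | T x) p x * (- ln (p x)) =
  \sum_(x | T x) \sum_c (Jf q p Phi) c x * ln ((Pc q p Phi) c / (Jf q p Phi) c x)
  + \sum_(x | T x) S x.
  by rewrite -big_split; apply: eq_bigr => x Tx; exact: stepB.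
rewrite lnL in HA; nra.
Qed.

Lemma ln_prod {R : realType} (I : finType) (P : pred I) (F : I -> R) :
  (forall i, P i -> 0 < F i) -> ln (\prod_(i | P i) F i) = \sum_(i | P i) ln (F i).
Proof.
move=> Fp.
suff [] : 0 < \prod_(i | P i) F i /\ ln (\prod_(i | P i) F i) = \sum_(i | P i) ln (F i) by [].
apply: (big_rec2 (fun y1 y2 => 0 < y1 /\ ln y1 = y2)); first by rewrite ln1.
move=> i y1 y2 Pi [y1p <-]; split; first by rewrite mulr_gt0 ?Fp.
by rewrite lnM ?posrE ?Fp.
Qed.

Lemma sum2_prod {R : realType} (A B : finType) (n : nat) (F : 'I_n -> A -> B -> R) :
  \sum_(x1 : vec A n) \sum_(x2 : vec B n) \prod_i F i (x1 i) (x2 i) =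
  \prod_i \sum_a \sum_b F i a b.
Proof.
rewrite (eq_bigr (fun x1 : vec A n => \prod_i \sum_b F i (x1 i) b)); last first.
  by move=> x1 _; rewrite (bigA_distr_bigA (fun i b => F i (x1 i) b)).
by rewrite -(bigA_distr_bigA (fun i a => \sum_b F i a b)).
Qed.

Lemma sum_ffun_prod {R : realType} (A : finType) (n : nat) (F : 'I_n -> A -> R) :
  \sum_(x : vec A n) \prod_i F i (x i) = \prod_i \sum_a F i a.
Proof. by rewrite -(bigA_distr_bigA F). Qed.

Lemma pn_sum1 {R : realType} (A B : finType) (p : A -> B -> R) n :
  \sum_a \sum_b p a b = 1 -> \sum_(x1 : vec A n) \sum_(x2 : vec B n) pn p x1 x2 = 1.
Proof.
by move=> p1; rewrite /pn (@sum2_prod _ _ _ n (fun _ a b => p a b)); under eq_bigr do rewrite p1; rewrite big1.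
Qed.

Lemma pn_ge0 {R : realType} (A B : finType) (p : A -> B -> R) n x1 x2 :
  (forall a b, 0 <= p a b) -> 0 <= pn (n:=n) p x1 x2.
Proof. by move=> p0; apply: prodr_ge0. Qed.

Lemma pn_moment {R : realType} (A B : finType) (p : A -> B -> R) n (i j : 'I_n)
  (G H : A -> B -> R) :
  \sum_a \sum_b p a b = 1 ->
  \sum_(x1 : vec A n) \sum_(x2 : vec B n) pn p x1 x2 * (G (x1 i) (x2 i) * H (x1 j) (x2 j)) =
  if i == j then \sum_a \sum_b p a b * (G a b * H a b)
  else (\sum_a \sum_b p a b * G a b) * (\sum_a \sum_b p a b * H a b).
Proof.
move=> p1.
pose F (l : 'I_n) a b := p a b * ((if l == i then G a b else 1) * (if l == j then H a b else 1)).
have E x1 x2 : pn p x1 x2 * (G (x1 i) (x2 i) * H (x1 j) (x2 j)) = \prod_l F l (x1 l) (x2 l).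
  rewrite /F big_split /= -/(pn p x1 x2); congr (_ * _).
  rewrite big_split /=.
  rewrite (bigD1 i) //= eqxx big1 ?mulr1; last by move=> l /negbTE ->.
  by rewrite (bigD1 j) //= eqxx big1 ?mulr1; last by move=> l /negbTE ->.
under eq_bigr do under eq_bigr do rewrite E.
rewrite sum2_prod /F.
have [<-|ij] := eqVneq i j.
  rewrite (bigD1 i) //= eqxx [X in _ * X]big1 ?mulr1 // => l /negbTE ->.
  by rewrite -[RHS]p1; apply: eq_bigr => a _; apply: eq_bigr => b _; rewrite mulr1 mulr1.
rewrite (bigD1 i) //= (bigD1 j) /=; last by rewrite eq_sym.
rewrite !eqxx (negbTE ij) (eq_sym j i) (negbTE ij) [X in _ * (_ * X)]big1 ?mulr1.
  congr (_ * _); apply: eq_bigr => a _; apply: eq_bigr => b _; by rewrite ?mulr1 ?mul1r.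
move=> l /andP[li lj]; rewrite (negbTE li) (negbTE lj) -[RHS]p1.
by apply: eq_bigr => a _; apply: eq_bigr => b _; rewrite mulr1 mulr1.
Qed.

Lemma sum_ffun_coord {R : realType} (A : finType) (n : nat) (m : A -> R) (G : A -> R) (i : 'I_n) :
  \sum_a m a = 1 ->
  \sum_(x : vec A n) (\prod_j m (x j)) * G (x i) = \sum_a m a * G a.
Proof.
move=> m1.
pose F (l : 'I_n) a := m a * (if l == i then G a else 1).
have E x : (\prod_j m (x j)) * G (x i) = \prod_l F l (x l).
  rewrite /F big_split /=; congr (_ * _).
  by rewrite (bigD1 i) //= eqxx big1 ?mulr1 // => l /negbTE ->.
under eq_bigr do rewrite E.
rewrite sum_ffun_prod (bigD1 i) //= [X in _ * X]big1 ?mulr1.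
  by apply: eq_bigr => a _; rewrite /F eqxx.
by move=> l /negbTE li; rewrite /F li -[RHS]m1; apply: eq_bigr => a _; rewrite mulr1.
Qed.

Lemma entropy_prod {R : realType} (A : finType) (n : nat) (m : A -> R) :
  (forall a, 0 <= m a) -> \sum_a m a = 1 ->
  \sum_(x : vec A n) (\prod_j m (x j)) * ln (\prod_j m (x j)) =
  n%:R * \sum_a m a * ln (m a).
Proof.
move=> m0 m1.
have E x : (\prod_j m (x j)) * ln (\prod_j m (x j)) =
           \sum_i (\prod_j m (x j)) * ln (m (x i)).
  rewrite -big_distrr /=.
  have [->|Mn0] := eqVneq (\prod_j m (x j)) 0; first by rewrite !mul0r.
  congr (_ * _); apply: ln_prod => j _.
  rewrite lt_def m0 andbT; apply: contra Mn0 => /eqP mj.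
  by apply/prodf_eq0; exists j => //; rewrite mj.
under eq_bigr do rewrite E.
rewrite exchange_big /=.
under eq_bigr do rewrite (@sum_ffun_coord _ _ _ m (fun a => ln (m a))) //.
by rewrite sumr_const card_ord mulr_natl.
Qed.

Lemma marg_x2 {R : realType} (A B : finType) (p : A -> B -> R) n (x1 : vec A n) :
  \sum_(x2 : vec B n) pn p x1 x2 = \prod_i marg1 p (x1 i).
Proof. by rewrite /pn (@sum_ffun_prod _ _ _ (fun i b => p (x1 i) b)). Qed.

Lemma marg_x1 {R : realType} (A B : finType) (p : A -> B -> R) n (x2 : vec B n) :
  \sum_(x1 : vec A n) pn p x1 x2 = \prod_i marg2 p (x2 i).
Proof. by rewrite /pn (@sum_ffun_prod _ _ _ (fun i a => p a (x2 i))). Qed.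

Definition mu2 {R : realType} {A B : finType} (p : A -> B -> R) (g : A -> B -> R) : R :=
  \sum_a \sum_b p a b * g a b.
Definition dev {R : realType} {A B : finType} (p : A -> B -> R) (g : A -> B -> R) (n : nat)
  (x1 : vec A n) (x2 : vec B n) : R :=
  n%:R^-1 * \sum_i g (x1 i) (x2 i) - mu2 p g.
Definition var2 {R : realType} {A B : finType} (p : A -> B -> R) (g : A -> B -> R) : R :=
  \sum_a \sum_b p a b * (g a b - mu2 p g) ^+ 2.

Lemma var2_ge0 {R : realType} (A B : finType) (p : A -> B -> R) g :
  (forall a b, 0 <= p a b) -> 0 <= var2 p g.
Proof.
by move=> p0; apply: sumr_ge0 => a _; apply: sumr_ge0 => b _; rewrite mulr_ge0 ?sqr_ge0.
Qed.

Lemma var_dev {R : realType} (A B : finType) (p : A -> B -> R) g n :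
  (0 < n)%N -> \sum_a \sum_b p a b = 1 ->
  \sum_(x1 : vec A n) \sum_(x2 : vec B n) pn p x1 x2 * (dev p g n x1 x2) ^+ 2 =
  var2 p g / n%:R.
Proof.
move=> n0 p1.
set mu := mu2 p g.
pose g' a b := g a b - mu.
have nn0 : (n%:R : R) != 0 by rewrite pnatr_eq0 -lt0n.
have Ed x1 x2 : dev p g n x1 x2 = n%:R^-1 * \sum_i g' (x1 i) (x2 i).
  rewrite /dev /g' sumrB sumr_const card_ord -/mu; field => //.
have Eg' : \sum_a \sum_b p a b * g' a b = 0.
  rewrite /g'; under eq_bigr do under eq_bigr do rewrite mulrBr.
  under eq_bigr do rewrite sumrB -big_distrl /=.
  by rewrite sumrB -big_distrl /= p1 mul1r subrr.
have Ex x1 x2 : pn p x1 x2 * (dev p g n x1 x2) ^+ 2 =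
   n%:R^-2 * \sum_i \sum_j pn p x1 x2 * (g' (x1 i) (x2 i) * g' (x1 j) (x2 j)).
  rewrite Ed exprMn [(\sum_i _) ^+ 2]expr2 big_distrlr /= mulrCA exprVn; congr (_ * _).
  by rewrite big_distrr; apply: eq_bigr => i _; rewrite big_distrr.
under eq_bigr do under eq_bigr do rewrite Ex.
under eq_bigr do rewrite -big_distrr /=.
rewrite -big_distrr /=.
have -> : \sum_(x1 : vec A n) \sum_(x2 : vec B n) \sum_i \sum_j
   pn p x1 x2 * (g' (x1 i) (x2 i) * g' (x1 j) (x2 j)) =
   \sum_i \sum_j \sum_(x1 : vec A n) \sum_(x2 : vec B n)
   pn p x1 x2 * (g' (x1 i) (x2 i) * g' (x1 j) (x2 j)).
  under eq_bigr do (rewrite exchange_big /=; under eq_bigr do rewrite exchange_big /=).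
  rewrite exchange_big /=; apply: eq_bigr => i _; by rewrite exchange_big.
under eq_bigr do under eq_bigr do rewrite pn_moment //.
rewrite (eq_bigr (fun _ => \sum_a \sum_b p a b * (g' a b * g' a b))); last first.
  move=> i _; rewrite (bigD1 i) //= eqxx [X in _ + X]big1 ?addr0 // => j /negbTE.
  by rewrite eq_sym => ->; rewrite Eg' mul0r.
rewrite sumr_const card_ord /var2 -/mu -mulr_natl.
have -> : \sum_a \sum_b p a b * (g' a b * g' a b) = \sum_a \sum_b p a b * (g a b - mu) ^+ 2.
  by apply: eq_bigr => a _; apply: eq_bigr => b _; rewrite /g' expr2.
field => //.
Qed.

Lemma log2_prodV {R : realType} (A B : finType) (p r : A -> B -> R) n (x1 : vec A n) (x2 : vec B n) :
  (forall a b, 0 <= p a b) -> (forall a b, 0 < p a b -> 0 < r a b) -> 0 < pn p x1 x2 ->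
  log2 ((\prod_i r (x1 i) (x2 i))^-1) = \sum_i (- log2 (r (x1 i) (x2 i))).
Proof.
move=> p0 rp pnp.
have pip i : 0 < p (x1 i) (x2 i).
  rewrite lt_def p0 andbT; apply/negP => /eqP e.
  by move: pnp; rewrite /pn (bigD1 i) //= e mul0r ltxx.
have rip i : 0 < r (x1 i) (x2 i) by apply: rp.
rewrite /log2 lnV ?posrE ?prodr_gt0 // ln_prod // -sumrN mulr_suml.
by apply: eq_bigr => i _; rewrite mulNr.
Qed.

Lemma filt_sum {R : realType} (A B : finType) (p F : A -> B -> R) :
  - \sum_a \sum_(b | p a b != 0) p a b * F a b = \sum_a \sum_b p a b * (- F a b).
Proof.
rewrite -sumrN; apply: eq_bigr => a _; rewrite -sumrN big_mkcond /=.
apply: eq_bigr => b _; case: eqP => [->|_]; first by rewrite !mul0r oppr0.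
by rewrite mulrN.
Qed.

Definition g0 {R : realType} {A B : finType} (p : A -> B -> R) a b := - log2 (p a b).
Definition g12 {R : realType} {A B : finType} (p : A -> B -> R) a b := - log2 (p a b / marg2 p b).
Definition g21 {R : realType} {A B : finType} (p : A -> B -> R) a b := - log2 (p a b / marg1 p a).

Lemma nu_le {R : realType} (A B : finType) (p : A -> B -> R) n (gamma : R) :
  (forall a b, 0 <= p a b) -> \sum_a \sum_b p a b = 1 -> (0 < n)%N -> 0 < gamma ->
  nu p n gamma <= (var2 p (g0 p) + var2 p (g12 p) + var2 p (g21 p)) / (n%:R * gamma ^+ 2).
Proof.
move=> p0 p1 n0 gp.
have g2p : 0 < gamma ^+ 2 by rewrite exprn_gt0.
pose D x1 x2 := (dev p (g0 p) n x1 x2) ^+ 2 + (dev p (g12 p) n x1 x2) ^+ 2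
   + (dev p (g21 p) n x1 x2) ^+ 2.
have m2p b a : 0 < p a b -> 0 < marg2 p b.
  move=> pab; apply: lt_le_trans pab _; rewrite /marg2 (bigD1 a) //= lerDl.
  exact: sumr_ge0.
have m1p a b : 0 < p a b -> 0 < marg1 p a.
  move=> pab; apply: lt_le_trans pab _; rewrite /marg1 (bigD1 b) //= lerDl.
  exact: sumr_ge0.
have pw x1 x2 : (if ~~ typical p gamma x1 x2 then pn p x1 x2 else 0)
    <= pn p x1 x2 * D x1 x2 / gamma ^+ 2.
  have pn0 : 0 <= pn p x1 x2 by exact: pn_ge0.
  have D0 : 0 <= D x1 x2 by rewrite /D !addr_ge0 ?sqr_ge0.
  case: ifP => [nt|_]; last by apply: mulr_ge0; [apply: mulr_ge0|rewrite invr_ge0 ltW].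
  have [e|pnp] := eqVneq (pn p x1 x2) 0; first by rewrite e !mul0r.
  have pnp' : 0 < pn p x1 x2 by rewrite lt_def pnp pn0.
  rewrite -mulrA ler_pMr // ler_pdivlMr // mul1r.
  move: nt; rewrite /typical pnp' /=.
  have e0 : n%:R^-1 * log2 (pn p x1 x2)^-1 - joint_entropy p = dev p (g0 p) n x1 x2.
    rewrite /dev /pn (@log2_prodV _ _ _ p p) //; congr (_ - _).
    by rewrite /mu2 /joint_entropy filt_sum.
  have e12 : n%:R^-1 * log2 (pn_cond12 p x1 x2)^-1 - cond_entropy12 p = dev p (g12 p) n x1 x2.
    rewrite /dev /pn_cond12 (@log2_prodV _ _ _ p (fun a b => p a b / marg2 p b)) //.
      by congr (_ - _); rewrite /mu2 /cond_entropy12 filt_sum.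
    by move=> a b pab; rewrite divr_gt0 // (m2p b a).
  have e21 : n%:R^-1 * log2 (pn_cond21 p x1 x2)^-1 - cond_entropy21 p = dev p (g21 p) n x1 x2.
    rewrite /dev /pn_cond21 (@log2_prodV _ _ _ p (fun a b => p a b / marg1 p a)) //.
      by congr (_ - _); rewrite /mu2 /cond_entropy21 filt_sum.
    by move=> a b pab; rewrite divr_gt0 // (m1p a b).
  rewrite e0 e12 e21 /D.
  have sq (d : R) : ~~ (`|d| <= gamma) -> gamma ^+ 2 <= d ^+ 2.
    rewrite -ltNge => h; rewrite -[d ^+ 2]real_normK ?num_real //.
    rewrite ler_sqr ?nnegrE ?normr_ge0 ?(ltW gp) //; exact: ltW.
  case/nandP => [h|]; first by have := sq _ h; have := sqr_ge0 (dev p (g0 p) n x1 x2);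
    have := sqr_ge0 (dev p (g21 p) n x1 x2); lra.
  case/nandP => [h|h].
    have := sq _ h; have := sqr_ge0 (dev p (g0 p) n x1 x2);
    have := sqr_ge0 (dev p (g12 p) n x1 x2); lra.
  have := sq _ h; have := sqr_ge0 (dev p (g12 p) n x1 x2);
  have := sqr_ge0 (dev p (g21 p) n x1 x2); lra.
rewrite /nu.
apply: le_trans (_ : \sum_(x1 : vec A n) \sum_(x2 : vec B n) pn p x1 x2 * D x1 x2 / gamma ^+ 2 <= _).
  apply: ler_sum => x1 _; rewrite big_mkcond /=; apply: ler_sum => x2 _; exact: pw.
have -> : \sum_(x1 : vec A n) \sum_(x2 : vec B n) pn p x1 x2 * D x1 x2 / gamma ^+ 2 =
  (\sum_(x1 : vec A n) \sum_(x2 : vec B n) pn p x1 x2 * (dev p (g0 p) n x1 x2) ^+ 2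
  + \sum_(x1 : vec A n) \sum_(x2 : vec B n) pn p x1 x2 * (dev p (g12 p) n x1 x2) ^+ 2
  + \sum_(x1 : vec A n) \sum_(x2 : vec B n) pn p x1 x2 * (dev p (g21 p) n x1 x2) ^+ 2) / gamma ^+ 2.
  rewrite -!big_split big_distrl /=; apply: eq_bigr => x1 _.
  rewrite -!big_split big_distrl /=; apply: eq_bigr => x2 _.
  by rewrite /D !mulrDr.
rewrite !var_dev //.
have nn0 : (n%:R : R) != 0 by rewrite pnatr_eq0 -lt0n.
rewrite le_eqVlt; apply/orP; left; apply/eqP; field.
by rewrite nn0 gt_eqF.
Qed.

Lemma Jf_marg2 {R : realType} (K X C : finType) (q : K -> R) (p : X -> R)
  (Phi : K -> X -> C) x :
  \sum_k q k = 1 -> \sum_c Jf q p Phi c x = p x.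
Proof.
move=> q1; rewrite /Jf exchange_big /=.
under eq_bigr do rewrite -big_distrr /= sum_eq1 mulr1.
by rewrite -big_distrl /= q1 mul1r.
Qed.

Definition qpair {R : realType} {A B : finType} (p : A -> B -> R) (n : nat)
  (k : vec A n * vec B n) : R := pn p k.1 k.2.
Definition Phip {X1 X2 : finType} {n : nat} (S : system X1 X2 n)
  (k : vec X1 n * vec X2 n) (x : vec X1 n * vec X2 n) : (C1 S * C2 S)%type :=
  (Phi1 S k.1 x.1, Phi2 S k.2 x.2).
Definition Tset {R : realType} {X1 X2 : finType} (pX : X1 -> X2 -> R) (gamma : R) {n : nat}
  (S : system X1 X2 n) (x : vec X1 n * vec X2 n) : bool :=
  typical pX gamma x.1 x.2 && (psi S (phi1 S x.1) (phi2 S x.2) == x).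

Lemma qpair_sum1 {R : realType} (A B : finType) (p : A -> B -> R) n :
  \sum_a \sum_b p a b = 1 -> \sum_k qpair p n k = 1.
Proof.
move=> p1; rewrite /qpair -(pair_bigA _ (fun k1 k2 => pn p k1 k2)) /=.
exact: pn_sum1.
Qed.

Lemma ln2_gt0 {R : realType} : 0 < ln (2 : R).
Proof. by apply: ln_gt0; rewrite ltr1n. Qed.

Lemma glue_gen {R : realType} (X1 X2 : finType) (pX pK : X1 -> X2 -> R) n
  (S : system X1 X2 n) (K1 : finType) (pi : (vec X1 n * vec X2 n) -> K1) (N : nat)
  (Hk gamma eps delta : R) :
  is_pmf2 pX -> is_pmf2 pK -> (0 < n)%N -> 0 < gamma -> (0 < N)%N -> 0 <= delta ->
  (forall a c, \sum_(x | Tset pX gamma S x)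
       ((J3 (qpair pK n) (qpair pX n) (Phip S) pi a c x != 0)%:R : R) <= N%:R) ->
  \sum_a q1f (qpair pK n) pi a * ln (q1f (qpair pK n) pi a) = - (n%:R * Hk * ln 2) ->
  0 < 1 - (nu pX n gamma + eps) -> err_prob S pX <= eps -> leakage S pX pK <= delta ->
  n%:R * (joint_entropy pX - gamma) <=
    log2 ((1 - (nu pX n gamma + eps))^-1) + delta / (1 - (nu pX n gamma + eps))
    + n%:R * Hk + log2 N%:R.
Proof.
move=> [pX0 pX1] [pK0 pK1] n0 gp N0 d0 Hcnt Hent alp herr hleak.
set q := qpair pK n. set p := qpair pX n. set Phi := Phip S. set T := Tset pX gamma S.
set al := 1 - (nu pX n gamma + eps).
have q0 k : 0 <= q k by apply: pn_ge0.
have q1 : \sum_k q k = 1 by apply: qpair_sum1.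
have p0 x : 0 <= p x by apply: pn_ge0.
have p1 : \sum_x p x = 1 by apply: qpair_sum1.
have l2 := @ln2_gt0 R.
have nR0 : (0 : R) < n%:R by rewrite ltr0n.
have Tp x : T x -> 0 < p x by case/andP => /and4P[].
set h := n%:R * (joint_entropy pX - gamma) * ln 2.
have Hh x : T x -> h <= - ln (p x).
  case/andP => /and4P[pp _ _ ty] _.
  have := ty; rewrite ler_norml => /andP[ty1 _].
  have e : log2 (pn pX x.1 x.2)^-1 = - ln (p x) / ln 2.
    by rewrite /log2 lnV ?posrE.
  rewrite e in ty1.
  have : n%:R * (joint_entropy pX - gamma) <= - ln (p x) / ln 2.
    have ni : (0 : R) < n%:R^-1 by rewrite invr_gt0.
    rewrite -(ler_pM2l ni) mulrA mulVf ?mul1r ?gt_eqF //; lra.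
  by rewrite /h ler_pdivlMr.
have Hc := @core R _ _ _ _ q p Phi pi T N h q0 q1 p0 p1 Tp N0 Hcnt Hh.
have cjE : @cipher_joint R X1 X2 n S pX pK = Jf q p Phi.
  apply: functional_extensionality => c; apply: functional_extensionality => x.
  rewrite /cipher_joint /Jf (pair_bigA _ (fun k1 k2 => pn pK k1 k2 * pn pX x.1 x.2 *
     ((Phi1 S k1 x.1 == c.1) && (Phi2 S k2 x.2 == c.2))%:R)) /=.
  by apply: eq_bigr => k _; case: c => c1 c2; rewrite /Phi /Phip xpair_eqE.
have IvE : Ival q p Phi = leakage S pX pK * ln 2.
  have -> : leakage S pX pK = mutinf (Jf q p Phi) by rewrite /leakage -cjE.
  rewrite /mutinf /Ival big_distrl; apply: eq_bigr => c _.
  rewrite [X in _ = X * _]big_mkcond big_distrl /=; apply: eq_bigr => x _.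
  rewrite /marg1 /marg2 Jf_marg2 //.
  case: eqP => [->|_]; first by rewrite !mul0r.
  by rewrite /= /log2 -mulrA mulfVK // gt_eqF.
rewrite IvE Hent in Hc.
set PT := \sum_(x | T x) p x in Hc.
have PTge : al <= PT.
  have cover : \sum_(x1 : vec X1 n) \sum_(x2 : vec X2 n) pn pX x1 x2 <=
    \sum_(x1 : vec X1 n) \sum_(x2 : vec X2 n)
      ((if T (x1, x2) then pn pX x1 x2 else 0)
       + (if ~~ typical pX gamma x1 x2 then pn pX x1 x2 else 0)
       + (if psi S (phi1 S x1) (phi2 S x2) != (x1, x2) then pn pX x1 x2 else 0)).
    apply: ler_sum => x1 _; apply: ler_sum => x2 _.
    have := pX0; have := @pn_ge0 R _ _ pX n x1 x2 pX0.
    rewrite /T /Tset /=.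
    by case: (typical _ _ _ _); case: eqP => _ /=; lra.
  have split3 (F G H : vec X1 n -> vec X2 n -> R) :
    \sum_(x1 : vec X1 n) \sum_(x2 : vec X2 n) (F x1 x2 + G x1 x2 + H x1 x2) =
    \sum_(x1 : vec X1 n) \sum_(x2 : vec X2 n) F x1 x2
    + \sum_(x1 : vec X1 n) \sum_(x2 : vec X2 n) G x1 x2
    + \sum_(x1 : vec X1 n) \sum_(x2 : vec X2 n) H x1 x2.
    by rewrite -!big_split; apply: eq_bigr => x1 _; rewrite -!big_split.
  rewrite pn_sum1 // split3 in cover.
  have ePT : PT = \sum_(x1 : vec X1 n) \sum_(x2 : vec X2 n) (if T (x1, x2) then pn pX x1 x2 else 0).
    rewrite /PT big_mkcond /= -(pair_bigA _ (fun x1 x2 => if T (x1, x2) then p (x1, x2) else 0)).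
    by [].
  have enu : nu pX n gamma = \sum_(x1 : vec X1 n) \sum_(x2 : vec X2 n)
      (if ~~ typical pX gamma x1 x2 then pn pX x1 x2 else 0).
    by rewrite /nu; apply: eq_bigr => x1 _; rewrite big_mkcond.
  have eerr : err_prob S pX = \sum_(x1 : vec X1 n) \sum_(x2 : vec X2 n)
      (if psi S (phi1 S x1) (phi2 S x2) != (x1, x2) then pn pX x1 x2 else 0).
    by rewrite /err_prob; apply: eq_bigr => x1 _; rewrite big_mkcond.
  rewrite -ePT -enu -eerr in cover.
  rewrite /al; lra.
have PTp : 0 < PT by exact: lt_le_trans alp PTge.
set L2 := ln (2 : R) in Hc l2 *.
set LN := ln (N%:R : R) in Hc *.
set lk := leakage S pX pK in Hc hleak *.
have A1 : h <= - ln PT + lk * L2 / PT + n%:R * Hk * L2 + LN.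
  have e : - ln PT + lk * L2 / PT + n%:R * Hk * L2 + LN =
     (- PT * ln PT + lk * L2 - PT * - (n%:R * Hk * L2) + PT * LN) / PT.
    by field; rewrite gt_eqF.
  by rewrite e ler_pdivlMr // mulrC.
have A2 : ln al <= ln PT by rewrite ler_ln ?posrE.
have A3 : lk * L2 / PT <= delta / al * L2.
  apply: le_trans (_ : delta * L2 / PT <= _).
    by rewrite ler_pM2r ?invr_gt0 // ler_pM2r.
  rewrite mulrAC ler_pM2r // ler_wpM2l // lef_pV2 ?posrE //.
have E : (- ln al / L2 + delta / al + n%:R * Hk + LN / L2) * L2 =
    - ln al + delta / al * L2 + n%:R * Hk * L2 + LN.
  by field; rewrite !gt_eqF.
rewrite /log2 -/L2 -/LN lnV ?posrE // -(ler_pM2r l2) E.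
move: A1; rewrite /h -/L2; lra.
Qed.

Lemma sum_fst {R : realType} (A B : finType) (F : A * B -> R) (a : A) :
  \sum_(k | k.1 == a) F k = \sum_b F (a, b).
Proof.
rewrite (eq_bigl (fun k : A * B => (k.1 == a) && true)) => [|k]; last by rewrite andbT.
rewrite (eq_bigr (fun k => F (k.1, k.2))) => [|[] //].
rewrite -(pair_big_dep (fun x => x == a) (fun _ _ => true) (fun x y => F (x, y))).
by rewrite big_pred1_eq.
Qed.

Lemma sum_snd {R : realType} (A B : finType) (F : A * B -> R) (b : B) :
  \sum_(k | k.2 == b) F k = \sum_a F (a, b).
Proof.
rewrite (eq_bigl (fun k : A * B => true && (k.2 == b))) => [|k] //.
rewrite (eq_bigr (fun k => F (k.1, k.2))) => [|[] //].
rewrite -(pair_big_dep (fun x => true) (fun _ y => y == b) (fun x y => F (x, y))).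
by apply: eq_bigr => a _; rewrite big_pred1_eq.
Qed.

Lemma entropy_ln {R : realType} (A : finType) (m : A -> R) :
  entropy m * ln 2 = - \sum_a m a * ln (m a).
Proof.
rewrite /entropy mulNr big_distrl big_mkcond /=; congr (- _); apply: eq_bigr => a _.
case: eqP => [->|_]; first by rewrite !mul0r.
by rewrite /log2 -mulrA mulfVK // gt_eqF // ln2_gt0.
Qed.

Lemma ent_fst {R : realType} (X1 X2 : finType) (pK : X1 -> X2 -> R) n :
  is_pmf2 pK ->
  \sum_a q1f (qpair pK n) fst a * ln (q1f (qpair pK n) fst a) =
  - (n%:R * entropy (marg1 pK) * ln 2).
Proof.
move=> [pK0 pK1].
have E a : q1f (qpair pK n) fst a = \prod_i marg1 pK (a i).
  by rewrite /q1f /qpair (@sum_fst R _ _ (fun k => pn pK k.1 k.2)) marg_x2.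
under eq_bigr do rewrite E.
rewrite entropy_prod; first by rewrite -mulrA entropy_ln mulrN opprK.
  by move=> a; apply: sumr_ge0.
exact: pK1.
Qed.

Lemma ent_snd {R : realType} (X1 X2 : finType) (pK : X1 -> X2 -> R) n :
  is_pmf2 pK ->
  \sum_b q1f (qpair pK n) snd b * ln (q1f (qpair pK n) snd b) =
  - (n%:R * entropy (marg2 pK) * ln 2).
Proof.
move=> [pK0 pK1].
have E b : q1f (qpair pK n) snd b = \prod_i marg2 pK (b i).
  by rewrite /q1f /qpair (@sum_snd R _ _ (fun k => pn pK k.1 k.2)) marg_x1.
under eq_bigr do rewrite E.
rewrite entropy_prod; first by rewrite -mulrA entropy_ln mulrN opprK.
  by move=> b; apply: sumr_ge0.
by rewrite /marg2 exchange_big.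
Qed.

Lemma sum_ind_card {R : realType} (T : finType) (P : pred T) (b : T -> bool) (D : {set T}) :
  (forall x, P x -> b x -> x \in D) ->
  \sum_(x | P x) ((b x)%:R : R) <= #|D|%:R.
Proof.
move=> H.
apply: le_trans (_ : \sum_x ((x \in D)%:R : R) <= _).
  rewrite big_mkcond /=; apply: ler_sum => x _.
  case: ifP => Px; last by case: (x \in D).
  by case bx: (b x) => //; rewrite (H x Px bx).
rewrite -natr_sum -sum1_card.
rewrite ler_nat [X in (_ <= X)%N]big_mkcond /=.
by apply/eq_leq/eq_bigr => x _; case: (x \in D).
Qed.

Lemma count_fst {R : realType} (X1 X2 : finFieldType) (pX pK : X1 -> X2 -> R) n
  (S : system X1 X2 n) (gamma : R) a c :
  \sum_(x | Tset pX gamma S x)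
     ((J3 (qpair pK n) (qpair pX n) (Phip S) fst a c x != 0)%:R : R) <= #|C2 S|%:R.
Proof.
set D := [set x : vec X1 n * vec X2 n |
           (psi S (phi1 S x.1) (phi2 S x.2) == x) && (Phi1 S a x.1 == c.1)].
apply: le_trans (@sum_ind_card R _ _ _ D _) _.
  move=> x /andP[_ hD] hJ; rewrite inE hD /=; apply/negPn/negP => hne.
  move/negP: hJ; apply; apply/eqP; apply: big1 => k /eqP k1.
  have -> : (Phip S k x == c) = false.
    by rewrite /Phip k1; apply/negbTE; apply: contraNN hne => /eqP <-.
  by rewrite mulr0.
rewrite ler_nat.
pose k0 : vec X2 n := [ffun => 0].
pose f (x : vec X1 n * vec X2 n) := Phi2 S k0 x.2.
rewrite -(@card_in_imset _ _ f D); first exact: max_card.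
move=> x y; rewrite !inE => /andP[/eqP hx /eqP ha] /andP[/eqP hy /eqP hb] hf.
rewrite -hx -hy -(factorization _ _ _ S a k0 x.1 x.2) -(factorization _ _ _ S a k0 y.1 y.2) ha hb.
by rewrite /f in hf; rewrite hf.
Qed.

Lemma count_snd {R : realType} (X1 X2 : finFieldType) (pX pK : X1 -> X2 -> R) n
  (S : system X1 X2 n) (gamma : R) b c :
  \sum_(x | Tset pX gamma S x)
     ((J3 (qpair pK n) (qpair pX n) (Phip S) snd b c x != 0)%:R : R) <= #|C1 S|%:R.
Proof.
set D := [set x : vec X1 n * vec X2 n |
           (psi S (phi1 S x.1) (phi2 S x.2) == x) && (Phi2 S b x.2 == c.2)].
apply: le_trans (@sum_ind_card R _ _ _ D _) _.
  move=> x /andP[_ hD] hJ; rewrite inE hD /=; apply/negPn/negP => hne.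
  move/negP: hJ; apply; apply/eqP; apply: big1 => k /eqP k2.
  have -> : (Phip S k x == c) = false.
    by rewrite /Phip k2; apply/negbTE; apply: contraNN hne => /eqP <-.
  by rewrite mulr0.
rewrite ler_nat.
pose k0 : vec X1 n := [ffun => 0].
pose f (x : vec X1 n * vec X2 n) := Phi1 S k0 x.1.
rewrite -(@card_in_imset _ _ f D); first exact: max_card.
move=> x y; rewrite !inE => /andP[/eqP hx /eqP ha] /andP[/eqP hy /eqP hb] hf.
rewrite -hx -hy -(factorization _ _ _ S k0 b x.1 x.2) -(factorization _ _ _ S k0 b y.1 y.2) ha hb.
by rewrite /f in hf; rewrite hf.
Qed.

Lemma nu_small {R : realType} (A B : finType) (p : A -> B -> R) (gamma c : R) :
  (forall a b, 0 <= p a b) -> \sum_a \sum_b p a b = 1 -> 0 < gamma -> 0 < c ->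
  exists n1, (0 < n1)%N /\ forall n, (n1 <= n)%N -> nu p n gamma < c.
Proof.
move=> p0 p1 gp cp.
set V := var2 p (g0 p) + var2 p (g12 p) + var2 p (g21 p).
have V0 : 0 <= V by rewrite /V !addr_ge0 ?var2_ge0.
have g2 : 0 < gamma ^+ 2 by rewrite exprn_gt0.
have gc : 0 < gamma ^+ 2 * c by rewrite mulr_gt0.
have := truncnS_gt (V / (gamma ^+ 2 * c)).
set m := (Num.Def.trunc _).+1 => hm.
exists m; split => // n hn.
have n0 : (0 < n)%N by apply: leq_trans hn.
apply: le_lt_trans (@nu_le R A B p n gamma p0 p1 n0 gp) _.
have nR : (m%:R : R) <= n%:R by rewrite ler_nat.
have nRp : (0 : R) < n%:R by rewrite ltr0n.
rewrite ltr_pdivrMr ?mulr_gt0 //.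
rewrite ltr_pdivrMr // in hm.
have : V < n%:R * (gamma ^+ 2 * c).
  apply: lt_le_trans hm _; rewrite ler_pM2r //.
have -> : c * (n%:R * gamma ^+ 2) = n%:R * (gamma ^+ 2 * c) by ring.
by rewrite -/V.
Qed.

Lemma final_alg {R : realType} (n H HK R1 R2 g D Y L : R) :
  0 < n -> n * (H - g) <= Y + D + n * HK + L -> n^-1 * L <= R2 + g -> R1 + R2 = H ->
  R1 <= HK + 2 * g + n^-1 * (D + Y).
Proof.
move=> np h1 h2 h3.
have ni : 0 < n^-1 by rewrite invr_gt0.
have hL : L <= n * (R2 + g).
  by rewrite -(ler_pM2l ni) mulrA mulVf ?mul1r // gt_eqF.
have h4 : n * (R1 - HK - 2 * g) <= D + Y.
  have e : n * (R1 - HK - 2 * g) = n * (H - g) - n * HK - n * (R2 + g) by rewrite -h3; ring.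
  rewrite e; lra.
have : R1 - HK - 2 * g <= n^-1 * (D + Y).
  by rewrite -(ler_pM2l np) mulrA mulfV ?mul1r // gt_eqF.
lra.
Qed.

Theorem proposition2 (R : realType) (X1 X2 : finFieldType)
  (pX pK : X1 -> X2 -> R) (hpX : is_pmf2 pX) (hpK : is_pmf2 pK)
  (delta0 : R) (hdelta0 : 0 < delta0)
  (eps delta : R) (heps : 0 < eps < 1) (hdelta : 0 < delta <= delta0)
  (R1 R2 : R) (hS : in_Sstar pX pK eps delta R1 R2) :
  forall gamma : R, 0 < gamma ->
    exists n0 : nat, forall n : nat, (n0 <= n)%N ->
      R1 <= entropy (marg1 pK) + 2 * gamma + zeta pX n gamma eps delta /\
      R2 <= entropy (marg2 pK) + 2 * gamma + zeta pX n gamma eps delta.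
Proof.
move=> gamma gp.
case: hS => [[sys hsys] hsum].
case: (hpX) => pX0 pX1.
have [n0 hn0] := hsys gamma gp.
have ce : 0 < 1 - eps by case/andP: heps => _ e1; rewrite subr_gt0.
have [n1 [n1p hn1]] := @nu_small R _ _ pX gamma (1 - eps) pX0 pX1 gp ce.
exists (maxn n0 n1) => n hn.
have hn0' : (n0 <= n)%N := leq_trans (leq_maxl _ _) hn.
have hn1' : (n1 <= n)%N := leq_trans (leq_maxr _ _) hn.
have npos : (0 < n)%N := leq_trans n1p hn1'.
have [hr1 hr2 herr hleak] := hn0 n hn0'.
have hnu := hn1 n hn1'.
have alp : 0 < 1 - (nu pX n gamma + eps) by lra.
have d0 : 0 <= delta by case/andP: hdelta => d _; exact: ltW.
have C1p : (0 < #|C1 (sys n)|)%N.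
  by apply/card_gt0P; exists (Phi1 (sys n) [ffun => 0] [ffun => 0]).
have C2p : (0 < #|C2 (sys n)|)%N.
  by apply/card_gt0P; exists (Phi2 (sys n) [ffun => 0] [ffun => 0]).
have nRp : (0 : R) < n%:R by rewrite ltr0n.
have G1 := @glue_gen R X1 X2 pX pK n (sys n) _ fst #|C2 (sys n)| (entropy (marg1 pK))
  gamma eps delta hpX hpK npos gp C2p d0
  (fun a c => @count_fst R X1 X2 pX pK n (sys n) gamma a c) (@ent_fst R X1 X2 pK n hpK) alp herr hleak.
have G2 := @glue_gen R X1 X2 pX pK n (sys n) _ snd #|C1 (sys n)| (entropy (marg2 pK))
  gamma eps delta hpX hpK npos gp C1p d0
  (fun b c => @count_snd R X1 X2 pX pK n (sys n) gamma b c) (@ent_snd R X1 X2 pK n hpK) alp herr hleak.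
rewrite /zeta /nu_eps; split.
  exact: (@final_alg R _ _ _ _ _ _ _ _ _ nRp G1 hr2 hsum).
by apply: (@final_alg R _ _ _ _ _ _ _ _ _ nRp G2 hr1); rewrite addrC.
Qed.
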